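(* For a prime $p$ and an integer $n\geq p$, $B_{n-p}\equiv V_n\pmod p$.
   Context: $B_n$ is the $n$-th Bell number (number of partitions of an $n$-element set). $V_n$ is the number of partitions of $\{1,\dots,n\}$ containing no singleton blocks; equivalently $\sum_{n\geq0}V_n\frac{t^n}{n!}=e^{e^t-1-t}$. *)

(* Defs.v *)
From mathcomp Require Import all_boot.

Set Implicit Arguments.
Unset Strict Implicit.
Unset Printing Implicit Defensive.

Definition set_partitions (n : nat) : {set {set {set 'I_n}}} :=
  [set P : {set {set 'I_n}} | partition P [set: 'I_n]].

Definition bell (n : nat) : nat := #|set_partitions n|.

Definition nosingleton_partitions (n : nat) : nat :=
  #|[set P in set_partitions n | [forall B in P, #|B| != 1]]|.

(* Main.v *)
Require Import Defs.
From mathcomp Require Import all_boot all_fingroup all_solvable.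
From mathcomp Require Import zify.

Set Implicit Arguments.
Unset Strict Implicit.
Unset Printing Implicit Defensive.

Lemma partition_byP (T : finType) (P : {set {set T}}) (D : {set T}) :
  (forall B, B \in P -> B != set0) ->
  (forall B, B \in P -> B \subset D) ->
  (forall x, x \in D -> exists2 B, B \in P & x \in B) ->
  (forall B1 B2 x, B1 \in P -> B2 \in P -> x \in B1 -> x \in B2 -> B1 = B2) ->
  partition P D.
Proof.
move=> h0 hD hc hu; apply/and3P; split.
- rewrite eqEsubset; apply/andP; split.
    by apply/bigcupsP => B /hD.
  apply/subsetP => x /hc [B PB xB]; apply/bigcupP; by exists B.
- apply/trivIsetP => B1 B2 P1 P2 ne; rewrite -setI_eq0; apply/eqP/setP => x.
  rewrite !inE; apply/negP => /andP [x1 x2]; by rewrite (hu _ _ _ P1 P2 x1 x2) eqxx in ne.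
- by apply/negP => /h0; rewrite eqxx.
Qed.

Lemma partition_uniq (T : finType) (P : {set {set T}}) (D : {set T}) B1 B2 x :
  partition P D -> B1 \in P -> B2 \in P -> x \in B1 -> x \in B2 -> B1 = B2.
Proof.
move=> /and3P [_ tP _] P1 P2 x1 x2.
by rewrite -(def_pblock tP P1 x1) (def_pblock tP P2 x2).
Qed.

Lemma partition_cover (T : finType) (P : {set {set T}}) (D : {set T}) x :
  partition P D -> x \in D -> exists2 B, B \in P & x \in B.
Proof.
move=> hP; rewrite -(cover_partition hP) => /bigcupP [B PB xB]; by exists B.
Qed.

Lemma card_parts_inj (aT rT : finType) (f : aT -> rT) : injective f ->
  #|[set P : {set {set aT}} | partition P [set: aT]]| =
  #|[set Q : {set {set rT}} | partition Q (f @: [set: aT])]|.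
Proof.
move=> injf.
have injF : injective (fun P : {set {set aT}} => [set f @: (B : {set aT}) | B in P]).
  exact: imset_inj (imset_inj injf).
rewrite -(card_imset _ injF); apply: eq_card => Q; rewrite inE.
apply/imsetP/idP.
- by move=> [P]; rewrite inE => hP ->; rewrite imset_partition.
- move=> hQ.
  have E : [set f @: (B : {set aT}) | B in [set f @^-1: (B : {set rT}) | B in Q]] = Q.
    rewrite -imset_comp; rewrite -[RHS]imset_id; apply: eq_in_imset => B QB /=.
    apply/setP => x; apply/imsetP/idP.
      by move=> [y]; rewrite inE => fy ->.
    move=> xB; have := subsetP (partitionS hQ QB) x xB => /imsetP [y _ xE].
    by exists y; rewrite // inE -xE.
  exists [set f @^-1: (B : {set rT}) | B in Q]; last by rewrite E.
  by rewrite inE -(imset_partition _ _ injf) E.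
Qed.

Section Rot.
Variables n p : nat.
Hypothesis pp : prime p.
Hypothesis pn : p <= n.
Local Notation m := (n - p).

Lemma p_gt0 : 0 < p. Proof. exact: prime_gt0. Qed.
Lemma p_gt1 : 1 < p. Proof. exact: prime_gt1. Qed.

Definition rot (x : 'I_n) : 'I_n :=
  insubd x (if x < m then val x else m + (x - m).+1 %% p).

Lemma rot_val x : val (rot x) = if x < m then val x else m + (x - m).+1 %% p.
Proof.
have hv : (if x < m then val x else m + (x - m).+1 %% p) < n.
  case: ifP => _; first exact: ltn_ord.
  have := ltn_pmod (x - m).+1 p_gt0; have := pn; lia.
by rewrite /rot val_insubd hv.
Qed.

Lemma iter_rot k x :
  val (iter k rot x) = if x < m then val x else m + (x - m + k) %% p.
Proof.
elim: k => [|k IH] /=.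
  case: ifP => // xm; rewrite addn0 modn_small; first by have := pn; lia.
  by have := ltn_ord x; lia.
rewrite rot_val; move: IH; case: (iter k rot x) => y ylt /= ->.
case: (ltnP x m) => xm; first by rewrite xm.
rewrite ltnNge leq_addr /=.
rewrite addKn addnS; apply/eqP; rewrite eqn_add2l; apply/eqP.
by rewrite -(addn1 ((x - m + k) %% p)) -(addn1 (x - m + k)) modnDml.
Qed.

Lemma iter_rot_p x : iter p rot x = x.
Proof.
apply: val_inj; rewrite iter_rot; case: ifP => // xm.
rewrite modnDr modn_small; first by rewrite subnKC // leqNgt xm.
by have := ltn_ord x; lia.
Qed.

Lemma rot_inj : injective rot.
Proof.
move=> x y E; rewrite -(iter_rot_p x) -(iter_rot_p y).
by case: p pp E => // q _ E; rewrite !iterSr E.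
Qed.

Definition sigma : {perm 'I_n} := perm rot_inj.

Lemma sigmaX_val k x :
  val ((sigma ^+ k)%g x) = if x < m then val x else m + (x - m + k) %% p.
Proof.
rewrite permX -iter_rot; congr val; apply: eq_iter; exact: permE.
Qed.

Lemma c0_lt : m < n.
Proof. have := p_gt0; have := pn; lia. Qed.

Definition c0 : 'I_n := Ordinal c0_lt.

Lemma sigmaX_fix k (x : 'I_n) : x < m -> (sigma ^+ k)%g x = x.
Proof. by move=> xm; apply: val_inj; rewrite sigmaX_val xm. Qed.

Lemma sigmaX_lt k (x : 'I_n) : ((sigma ^+ k)%g x < m) = (x < m).
Proof.
rewrite sigmaX_val; case: ifP => // _; lia.
Qed.

Lemma sigmaX_c0 (x : 'I_n) : m <= x -> (sigma ^+ (x - m))%g c0 = x.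
Proof.
move=> xm; apply: val_inj; rewrite sigmaX_val /= ltnn subnn add0n modn_small.
  by lia.
by have := ltn_ord x; have := pn; lia.
Qed.

Lemma sigma_p : (sigma ^+ p)%g = 1%g.
Proof.
by apply/permP => x; rewrite perm1; apply: val_inj; rewrite sigmaX_val; case: ifP => //= xm;
  rewrite modnDr modn_small //; have := ltn_ord x; have := pn; lia.
Qed.

Lemma sigma_neq1 : sigma != 1%g.
Proof.
apply/eqP => /(congr1 (fun s : {perm 'I_n} => val (s c0))).
rewrite perm1 -(expg1 sigma) sigmaX_val /= ltnn subnn add0n modn_small; first lia.
exact: p_gt1.
Qed.

Lemma order_sigma : #[sigma]%g = p.
Proof.
have : #[sigma]%g %| p by rewrite order_dvdn sigma_p.
case/primeP: pp => _ h /h /orP [/eqP o1|/eqP //].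
by move/eqP: o1; rewrite order_eq1 (negbTE sigma_neq1).
Qed.


Definition A : {set 'I_n} := [set x : 'I_n | x < m].
Definition C : {set 'I_n} := ~: A.
Definition S : {set {set {set 'I_n}}} :=
  [set P : {set {set 'I_n}} | partition P [set: 'I_n] && [forall B in P, #|B| != 1]].
Definition to := ((perm_action 'I_n)^* ^* )%act.

Lemma toE (P : {set {set 'I_n}}) (g : {perm 'I_n}) : to P g = [set [set g x | x in (B : {set 'I_n})] | B in P].
Proof. by rewrite /= !setactE; apply: eq_imset => B; rewrite /= setactE. Qed.

Lemma imset_permT (g : {perm 'I_n}) : [set g x | x in [set: 'I_n]] = [set: 'I_n].
Proof. by apply/eqP; rewrite eqEcard subsetT (card_imset _ (@perm_inj _ g)) leqnn. Qed.

Lemma acts_S : [acts <[sigma]>%g, on S | to].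
Proof.
apply/actsP => g _ P; rewrite toE !inE.
rewrite -{1}(imset_permT g) (imset_partition _ _ (@perm_inj _ g)); congr (_ && _).
apply/forall_inP/forall_inP => H B.
  by move=> PB; rewrite -(card_imset B (@perm_inj _ g)); apply: H; apply: imset_f.
by move=> /imsetP [B' PB' ->]; rewrite card_imset; [apply: H | exact: perm_inj].
Qed.

Lemma perm_stab (g : {perm 'I_n}) (B : {set 'I_n}) k :
  [set g x | x in B] = B -> [set (g ^+ k)%g x | x in B] = B.
Proof.
move=> gB; elim: k => [|k IH]; first by rewrite expg0 imset_perm1.
rewrite expgSr -[RHS]gB -[in RHS]IH -imset_comp; apply: eq_imset => x /=.
by rewrite permM.
Qed.

Lemma pgroup_sigma : (p.-group <[sigma]>)%g.
Proof. by rewrite /pgroup -orderE order_sigma pnat_id. Qed.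

Lemma C_c0 : c0 \in C.
Proof. by rewrite !inE /= ltnn. Qed.

Lemma inC (x : 'I_n) : (x \in C) = (m <= x).
Proof. by rewrite !inE -leqNgt. Qed.

Lemma inA (x : 'I_n) : (x \in A) = (x < m).
Proof. by rewrite !inE. Qed.

Lemma fixE :
  ('Fix_(S | to)(<[sigma]>))%g = [set P in S | [exists B in P, C \subset B]].
Proof.
apply/setP => P; rewrite in_setI [in RHS]inE; case PS: (P \in S) => //=.
move: PS; rewrite inE => /andP [hP /forall_inP hns].
have covP : cover P = [set: 'I_n] by exact: cover_partition hP.
apply/afixP/exists_inP.
- move=> hfix.
  have inP g B : g \in <[sigma]>%g -> B \in P -> [set g x | x in B] \in P.
    by move=> Gg PB; rewrite -(hfix g Gg) toE; apply: imset_f.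
  set B0 := pblock P c0.
  have PB0 : B0 \in P by apply: pblock_mem; rewrite covP inE.
  have c0B0 : c0 \in B0 by rewrite mem_pblock covP inE.
  have stab g z : g \in <[sigma]>%g -> z \in B0 -> g z \in B0 -> [set g x | x in B0] = B0.
    move=> Gg zB gzB; apply: (partition_uniq hP (inP g B0 Gg PB0) PB0 _ gzB).
    exact: imset_f.
  suff sB : [set sigma x | x in B0] = B0.
    exists B0 => //; apply/subsetP => x; rewrite inC => xC.
    suff : (sigma ^+ (x - m))%g c0 \in B0 by rewrite sigmaX_c0.
    rewrite -(perm_stab (x - m) sB); exact: imset_f.
  have [y yB0 yc] : exists2 y, y \in B0 & y != c0.
    case: (pickP [pred y in B0 | y != c0]) => [y /andP [] | none]; first by exists y.
    exfalso; have : B0 = [set c0].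
      apply/setP => z; rewrite inE; apply/idP/eqP; last by move=> ->.
      by move=> zB; have := none z; rewrite /= zB /= => /negbFE /eqP.
    by move=> E; have := hns B0 PB0; rewrite E cards1.
  case: (ltnP y m) => ym.
    apply: (stab sigma y (cycle_id _) yB0).
    by rewrite -{1}(expg1 sigma) sigmaX_fix.
  set g := (sigma ^+ (y - m))%g.
  have Gg : g \in <[sigma]>%g by apply: mem_cycle.
  have gc0 : g c0 = y by apply: sigmaX_c0.
  have gB : [set g x | x in B0] = B0 by apply: (stab g c0 Gg c0B0); rewrite gc0.
  have og : #[g]%g = p.
    have := order_dvdG Gg; rewrite -orderE order_sigma.
    case/primeP: pp => _ h /h /orP [/eqP o1|/eqP //].
    by move/eqP: o1; rewrite order_eq1 => /eqP g1; move: gc0; rewrite g1 perm1 => E; rewrite E eqxx in yc.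
  have : sigma \in <[g]>%g.
    suff -> : <[g]>%g = <[sigma]>%g by apply: cycle_id.
    apply/eqP; rewrite eqEcard cycle_subG Gg /= -!orderE og order_sigma leqnn //.
  by case/cycleP => j ->; apply: perm_stab.
- move=> [B0 PB0 CB0] g /cycleP [k ->]; rewrite toE.
  rewrite -[RHS]imset_id; apply: eq_in_imset => B PB /=.
  apply/eqP; rewrite eqEcard card_imset ?leqnn ?andbT; last exact: perm_inj.
  apply/subsetP => _ /imsetP [y yB ->].
  case: (ltnP y m) => ym; first by rewrite sigmaX_fix.
  have yB0 : y \in B0 by apply: (subsetP CB0); rewrite inC.
  have E := partition_uniq hP PB PB0 yB yB0; rewrite E.
  by apply: (subsetP CB0); rewrite inC leqNgt sigmaX_lt -leqNgt.
Qed.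

Definition F := [set P in S | [exists B in P, C \subset B]].
Definition psi (Q : {set {set 'I_n}}) : {set {set 'I_n}} :=
  [set B in Q | #|B| != 1] :|: [set C :|: [set x in A | [set x] \in Q]].
Definition phi (P : {set {set 'I_n}}) : {set {set 'I_n}} :=
  [set B in P | B \subset A] :|: [set [set x] | x in pblock P c0 :\: C].

Lemma c1_lt : m.+1 < n.
Proof. have := p_gt1; have := pn; lia. Qed.
Definition c1 : 'I_n := Ordinal c1_lt.

Lemma C_not1 (B : {set 'I_n}) : C \subset B -> #|B| != 1.
Proof.
move=> CB; apply/cards1P => [[z Bz]].
have h0 : c0 \in B by apply: (subsetP CB); exact: C_c0.
have h1 : c1 \in B by apply: (subsetP CB); rewrite inC /=.
move: h0 h1; rewrite Bz !inE => /eqP <- /eqP; move/(congr1 val) => /=; lia.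
Qed.

Lemma c0_notA : c0 \notin A.
Proof. by rewrite inA /= ltnn. Qed.

Lemma AC (x : 'I_n) : (x \in C) = (x \notin A).
Proof. by rewrite inC inA -leqNgt. Qed.

Lemma psi_F Q : partition Q A -> psi Q \in F.
Proof.
move=> hQ.
set U := [set x in A | [set x] \in Q].
set Bs := C :|: U.
have notBs B x : B \in Q -> #|B| != 1 -> x \in B -> x \notin Bs.
  move=> QB B1 xB; rewrite in_setU negb_or; apply/andP; split.
    by rewrite AC (subsetP (partitionS hQ QB)).
  rewrite inE; apply/negP => /andP [_ Qx].
  have E := partition_uniq hQ QB Qx xB (set11 x).
  by rewrite E cards1 in B1.
have inpsi B : (B \in psi Q) = ((B \in Q) && (#|B| != 1)) || (B == Bs).
  by rewrite /psi in_setU in_set1 inE.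
have hpart : partition (psi Q) [set: 'I_n].
  apply: partition_byP.
  - move=> B; rewrite inpsi => /orP [/andP [QB _]|/eqP ->].
      exact: (partition_neq0 hQ QB).
    by apply/set0Pn; exists c0; rewrite in_setU C_c0.
  - by move=> B _; apply: subsetT.
  - move=> x _; case xA: (x \in A).
      have [B QB xB] := partition_cover hQ xA.
      case B1: (#|B| != 1).
        by exists B; rewrite // inpsi QB B1.
      move/negbFE: B1 => /cards1P [z Bz]; move: xB; rewrite Bz inE => /eqP xz.
      exists Bs; first by rewrite inpsi eqxx orbT.
      by rewrite in_setU inE xA /= /U inE xA /= xz -Bz.
    exists Bs; first by rewrite inpsi eqxx orbT.
    by rewrite in_setU AC xA.
  - move=> B1 B2 x; rewrite !inpsi => /orP [/andP [Q1 n1]|/eqP ->] /orP [/andP [Q2 n2]|/eqP ->] x1 x2.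
    + exact: (partition_uniq hQ Q1 Q2 x1 x2).
    + by have := notBs _ _ Q1 n1 x1; rewrite x2.
    + by have := notBs _ _ Q2 n2 x2; rewrite x1.
    + by [].
rewrite !inE hpart /=; apply/andP; split.
  apply/forall_inP => B; rewrite inpsi => /orP [/andP [_ ->] //|/eqP ->].
  by apply: C_not1; apply: subsetUl.
by apply/exists_inP; exists Bs; [rewrite inpsi eqxx orbT | apply: subsetUl].
Qed.

Lemma F_part P : P \in F -> partition P [set: 'I_n].
Proof. by rewrite !inE => /andP [/andP [-> _] _]. Qed.

Lemma F_ns P B : P \in F -> B \in P -> #|B| != 1.
Proof. by rewrite !inE => /andP [/andP [_ /forall_inP h] _] /h. Qed.

Lemma F_B0 P : P \in F -> pblock P c0 \in P /\ C \subset pblock P c0.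
Proof.
move=> FP; have hP := F_part FP.
have covP : cover P = [set: 'I_n] by exact: cover_partition hP.
have PB0 : pblock P c0 \in P by apply: pblock_mem; rewrite covP inE.
have c0B0 : c0 \in pblock P c0 by rewrite mem_pblock covP inE.
move: FP; rewrite inE => /andP [_ /exists_inP [B PB CB]].
split => //; suff <- : B = pblock P c0 by [].
apply: (partition_uniq hP PB PB0 _ c0B0); exact: (subsetP CB _ C_c0).
Qed.

Lemma phi_psi Q : partition Q A -> phi (psi Q) = Q.
Proof.
move=> hQ; have FQ := psi_F hQ; have hP := F_part FQ.
set U := [set x in A | [set x] \in Q].
set Bs := C :|: U.
have inpsi B : (B \in psi Q) = ((B \in Q) && (#|B| != 1)) || (B == Bs).
  by rewrite /psi in_setU in_set1 inE.
have PBs : Bs \in psi Q by rewrite inpsi eqxx orbT.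
have pb : pblock (psi Q) c0 = Bs.
  apply: def_pblock; [exact: partition_trivIset hP | exact: PBs | by rewrite in_setU C_c0].
apply/setP => B; rewrite /phi pb in_setU inE inpsi.
apply/idP/idP.
- case/orP => [/andP [/orP [/andP [-> _] //|/eqP ->] sA]|].
    by have := subsetP sA c0; rewrite in_setU C_c0 (negbTE c0_notA) => /(_ isT).
  case/imsetP => x; rewrite in_setD in_setU => /andP [xC /orP [xC'|]].
    by rewrite xC' in xC.
  by rewrite inE => /andP [_ Qx] ->.
- move=> QB; case B1: (#|B| != 1).
    by rewrite QB (partitionS hQ QB).
  move/negbFE: B1 => /cards1P [z Bz].
  apply/orP; right; apply/imsetP; exists z => //.
  have zA : z \in A by apply: (subsetP (partitionS hQ QB)); rewrite Bz set11.
  rewrite in_setD in_setU AC zA /= inE zA -Bz QB.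
  by [].
Qed.

Lemma phi_parts P : P \in F -> partition (phi P) A.
Proof.
move=> FP; have hP := F_part FP; have [PB0 CB0] := F_B0 FP.
set B0 := pblock P c0 in PB0 CB0 *.
have inphi B : (B \in phi P) = ((B \in P) && (B \subset A)) || (B \in [set [set x] | x in B0 :\: C]).
  by rewrite /phi in_setU inE.
have B0nA : ~~ (B0 \subset A).
  apply/negP => /subsetP h; have := h c0 (subsetP CB0 _ C_c0).
  by rewrite (negbTE c0_notA).
apply: partition_byP.
- move=> B; rewrite inphi => /orP [/andP [PB _]|/imsetP [x _ ->]].
    exact: (partition_neq0 hP PB).
  by apply/set0Pn; exists x; rewrite inE.
- move=> B; rewrite inphi => /orP [/andP [_ //]|/imsetP [x]].
  by rewrite in_setD AC negbK => /andP [xA _] ->; rewrite sub1set.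
- move=> x xA; have [B PB xB] := partition_cover hP (in_setT x).
  case sA: (B \subset A); first by exists B; rewrite // inphi PB sA.
  move/negbT: sA => /subsetPn [y yB yA].
  have yB0 : y \in B0 by apply: (subsetP CB0); rewrite AC.
  have E := partition_uniq hP PB PB0 yB yB0.
  exists [set x]; last by rewrite set11.
  rewrite inphi; apply/orP; right; apply: imset_f.
  by rewrite in_setD AC negbK xA -E xB.
- move=> B1 B2 x; rewrite !inphi.
  move=> /orP [/andP [P1 s1]|/imsetP [y1 hy1 ->]] /orP [/andP [P2 s2]|/imsetP [y2 hy2 ->]] x1 x2.
  + exact: (partition_uniq hP P1 P2 x1 x2).
  + move: x2 hy2; rewrite inE => /eqP xy /setDP [yB0 _]; rewrite -xy in yB0.
    have E := partition_uniq hP P1 PB0 x1 yB0.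
    by rewrite -E s1 in B0nA.
  + move: x1 hy1; rewrite inE => /eqP xy /setDP [yB0 _]; rewrite -xy in yB0.
    have E := partition_uniq hP P2 PB0 x2 yB0.
    by rewrite -E s2 in B0nA.
  + by move: x1 x2; rewrite !inE => /eqP <- /eqP <-.
Qed.

Lemma psi_phi P : P \in F -> psi (phi P) = P.
Proof.
move=> FP; have hP := F_part FP; have [PB0 CB0] := F_B0 FP.
set B0 := pblock P c0 in PB0 CB0 *.
have inphi B : (B \in phi P) = ((B \in P) && (B \subset A)) || (B \in [set [set x] | x in B0 :\: C]).
  by rewrite /phi in_setU inE.
have EU : C :|: [set x in A | [set x] \in phi P] = B0.
  apply/setP => x; rewrite in_setU inE inphi.
  case xC: (x \in C); first by rewrite (subsetP CB0).
  have xA : x \in A by rewrite AC in xC; rewrite (negbFE xC).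
  rewrite xA /=; apply/idP/idP.
    case/orP => [/andP [Px _]|/imsetP [y]].
      by have := F_ns FP Px; rewrite cards1.
    by rewrite in_setD => /andP [_ yB0] /set1_inj ->.
  by move=> xB0; apply/orP; right; apply: imset_f; rewrite in_setD xC.
apply/setP => B; rewrite /psi EU in_setU in_set1 inE inphi.
apply/idP/idP.
- case/orP => [/andP [/orP [/andP [-> _] //|/imsetP [y _ ->]]]|/eqP -> //].
  by rewrite cards1.
- move=> PB; rewrite PB /= (F_ns FP PB) andbT.
  case sA: (B \subset A) => //=.
  move/negbT: sA => /subsetPn [y yB yA].
  have yB0 : y \in B0 by apply: (subsetP CB0); rewrite AC.
  by rewrite (partition_uniq hP PB PB0 yB yB0) eqxx orbT.
Qed.

Lemma card_F : #|F| = #|[set Q : {set {set 'I_n}} | partition Q A]|.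
Proof.
have inj : {in F &, injective phi}.
  by move=> P1 P2 F1 F2 E; rewrite -(psi_phi F1) E psi_phi.
rewrite -(card_in_imset inj); apply: eq_card => Q; rewrite inE.
apply/imsetP/idP.
  by move=> [P FP ->]; apply: phi_parts.
by move=> hQ; exists (psi Q); [apply: psi_F | rewrite phi_psi].
Qed.

End Rot.

Theorem corollary3 (p n : nat) :
  prime p -> p <= n -> bell (n - p) = nosingleton_partitions n %[mod p].
Proof.
move=> pp pn.
have le : n - p <= n by apply: leq_subr.
have winj : injective (widen_ord le) by move=> x y /(congr1 val) /= /val_inj.
have e1 : bell (n - p) = #|[set Q : {set {set 'I_n}} | partition Q (A n p)]|.
  rewrite /bell /set_partitions (card_parts_inj winj).
  suff -> : [set widen_ord le x | x in [set: 'I_(n - p)]] = A n p by [].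
  apply/setP => x; rewrite inA; apply/imsetP/idP.
    by move=> [y _ ->] /=.
  by move=> xm; exists (Ordinal xm) => //; apply: val_inj.
have e2 : [set P in set_partitions n | [forall B in P, #|B| != 1]] = S n.
  by apply/setP => P; rewrite !inE.
rewrite e1 -(card_F pp pn) /F -(fixE pp pn) /nosingleton_partitions e2.
by rewrite (pgroup_fix_mod (pgroup_sigma pp pn) (acts_S pp pn)).
Qed.
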